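(* Let $n\ge 2$ and let $\mathcal{F}$ be a maximal coclique of $\Gamma_{2n}$. Let $B$ be an $n$-space of $\mathrm{PG}(2n,q)$ that occurs in a flag of $\mathcal{F}$. Then there exists $k\in\{1,\ldots,n+1\}$ such that the number of flags in $\mathcal{F}$ that contain $B$ is precisely $\begin{bmatrix}k\\ 1\end{bmatrix}_q$. Furthermore, this number is $\begin{bmatrix}n+1\\ 1\end{bmatrix}_q$ if and only if every flag $(A',B')\in \mathcal{F}$ satisfies $A'\cap B\neq \emptyset$.
   Context: $\mathrm{PG}(2n,q)$ is the projective space of projective dimension $2n$ over the field of order $q$; an $i$-space is a subspace of projective dimension $i$. An $(n-1,n)$-flag is a pair $(A,B)$ with $A$ an $(n-1)$-space, $B$ an $n$-space and $A\subseteq B$; it ''contains'' $B$ if its $n$-space is $B$. Two such flags $(A_1,B_1),(A_2,B_2)$ are opposite if $A_1\cap B_2=A_2\cap B_1=\emptyset$. $\Gamma_{2n}$ is the graph whose vertices are the $(n-1,n)$-flags, adjacent when opposite; a maximal coclique is an inclusion-maximal set of pairwise non-opposite flags. $\begin{bmatrix}k\\ 1\end{bmatrix}_q=\frac{q^k-1}{q-1}$. *)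

(* Defs.v *)
From HB Require Import structures.
From mathcomp Require Import all_boot all_order all_algebra all_field.

Set Implicit Arguments. Unset Strict Implicit. Unset Printing Implicit Defensive.
Import GRing.Theory.
Local Open Scope ring_scope.

(* PG(2n,q) is modelled by the vector space F^(2n+1) (row vectors) over a
   finite field F with q = #|F|.  A projective i-space is a vector subspace
   of dimension i+1.  Subspaces are represented canonically by square
   matrices M with <<M>>%MS = M (the canonical generator of the row space),
   so that distinct subspaces correspond to distinct matrices. *)

Definition pdim (n : nat) : nat := (2 * n).+1.

Definition subsp (F : finFieldType) (n : nat) (M : 'M[F]_(pdim n)) : bool :=
  (<<M>>%MS == M).

Definition pspace (F : finFieldType) (n k : nat) (M : 'M[F]_(pdim n)) : bool :=
  subsp M && (\rank M == k.+1)%N.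

Definition flagT (F : finFieldType) (n : nat) : finType :=
  ('M[F]_(pdim n) * 'M[F]_(pdim n))%type.

Definition is_flag (F : finFieldType) (n : nat) (f : flagT F n) : bool :=
  [&& subsp f.1, (\rank f.1 == n)%N, @pspace F n n f.2 & (f.1 <= f.2)%MS].

Definition pdisjoint (F : finFieldType) (n : nat) (A B : 'M[F]_(pdim n)) : bool :=
  (\rank (A :&: B)%MS == 0)%N.

Definition opposite (F : finFieldType) (n : nat) (f g : flagT F n) : bool :=
  pdisjoint f.1 g.2 && pdisjoint g.1 f.2.

Definition coclique (F : finFieldType) (n : nat) (S : {set flagT F n}) : bool :=
  [forall f in S, is_flag f] && [forall f in S, forall g in S, ~~ opposite f g].

Definition maximal_coclique (F : finFieldType) (n : nat) (S : {set flagT F n}) : Prop :=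
  coclique S /\
  forall T : {set flagT F n}, coclique T -> S \subset T -> T = S.

Definition gauss1 (k q : nat) : nat := ((q ^ k - 1) %/ (q - 1))%N.

(* Main.v *)
Require Import Defs.
From HB Require Import structures.
From mathcomp Require Import all_boot all_order all_algebra all_field.
From mathcomp Require Import zify.
Set Implicit Arguments. Unset Strict Implicit. Unset Printing Implicit Defensive.
Import GRing.Theory.
Local Open Scope ring_scope.

Lemma card_bij (T1 T2 : finType) (X1 : {set T1}) (X2 : {set T2})
  (f : T1 -> T2) (g : T2 -> T1) :
  {in X1, forall x, f x \in X2} -> {in X2, forall y, g y \in X1} ->
  {in X1, cancel f g} -> {in X2, cancel g f} -> #|X1| = #|X2|.
Proof.
move=> fX gX fK gK.
have -> : X2 = f @: X1.
  apply/setP => y; apply/idP/imsetP => [yX|[x xX ->]]; last exact: fX.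
  by exists (g y); [apply: gX | rewrite gK].
symmetry; apply: card_in_imset.
by move=> x y xX yX e; rewrite -(fK x xX) -(fK y yX) e.
Qed.

Lemma card_subvec (F : finFieldType) m (W : 'M[F]_m) :
  #|[set v : 'rV[F]_m | (v <= W)%MS]| = (#|F| ^ \rank W)%N.
Proof.
pose R := row_base W.
have -> : [set v : 'rV[F]_m | (v <= W)%MS] = [set x *m R | x in [set: 'rV[F]_(\rank W)]].
  apply/setP => v; rewrite inE; apply/idP/imsetP => [|[x _ ->]].
    by rewrite -(eq_row_base W) => /submxP [D ->]; exists D.
  by rewrite -(eq_row_base W) submxMl.
by rewrite card_imset ?cardsT ?card_mx ?mul1n //; apply: row_free_inj; apply: row_base_free.
Qed.

Lemma card_lines (F : finFieldType) m (W : 'M[F]_m) :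
  (#|[set L : 'M[F]_m | [&& <<L>>%MS == L, \rank L == 1%N & (L <= W)%MS]]| * (#|F| - 1))%N
  = (#|F| ^ \rank W - 1)%N.
Proof.
set Lines := [set L : 'M[F]_m | _].
pose V := [set v : 'rV[F]_m | (v <= W)%MS] :\ 0.
have cV : #|V| = (#|F| ^ \rank W - 1)%N.
  by rewrite -card_subvec (cardsD1 0 [set v : 'rV[F]_m | (v <= W)%MS]) inE sub0mx add1n subn1.
rewrite -cV -(sum1_card (mem V)).
rewrite (partition_big (fun v : 'rV[F]_m => <<v>>%MS) (mem Lines)); last first.
  move=> v; rewrite !inE => /andP [nz vW].
  by rewrite genmx_id eqxx mxrank_gen rank_rV nz /= genmxE.
rewrite /= -sum_nat_const; apply: eq_bigr => L; rewrite inE => /and3P [/eqP gL rL LW].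
have nzL : L != 0 by rewrite -mxrank_eq0 (eqP rL).
pose v0 := nz_row L.
have nz0 : v0 != 0 by rewrite nz_row_eq0.
have v0L : (v0 == L)%MS.
  by rewrite -(mxrank_leqif_eq (nz_row_sub L)) rank_rV nz0 (eqP rL).
have gv0 : <<v0>>%MS = L by rewrite -gL; apply: eq_genmx; apply/eqmxP.
rewrite sum1dep_card.
have -> : [set v | (v \in V) && (<<v>>%MS == L)] = [set c *: v0 | c in [set~ (0 : F)]].
  apply/setP => v; rewrite !inE; apply/idP/imsetP => [/andP [/andP [nzv vW] /eqP gv]|[c]].
    have : (v <= v0)%MS.
      have h1 : (v <= <<v>>)%MS by rewrite genmxE.
      have h2 : (<<v0>> <= v0)%MS by rewrite genmxE.
      by rewrite (submx_trans h1) // gv -gv0.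
    case/sub_rVP => c vc; exists c => //; rewrite !inE; apply/eqP => c0; move: nzv; rewrite vc c0 scale0r eqxx //.
  rewrite !inE => c0 ->; rewrite scaler_eq0 (negbTE c0) (negbTE nz0) /=.
  rewrite (eqmx_scale v0 c0) (eq_genmx (eqmx_scale v0 c0)) gv0 eqxx andbT.
  by rewrite (submx_trans (nz_row_sub L)).
rewrite card_imset ?cardsC1 ?subn1 //.
move=> c d e; apply/eqP; rewrite -subr_eq0; apply/eqP.
have : (c - d) *: v0 == 0 by rewrite scalerBl e subrr.
by rewrite scaler_eq0 (negbTE nz0) orbF => /eqP.
Qed.

Definition perp (F : fieldType) p r (U : 'M[F]_(p, r)) : 'M[F]_r := <<kermx U^T>>%MS.

Lemma rank_perp (F : fieldType) p r (U : 'M[F]_(p, r)) : \rank (perp U) = (r - \rank U)%N.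
Proof. by rewrite /perp mxrank_gen mxrank_ker mxrank_tr. Qed.

Lemma perp_sym (F : fieldType) p1 p2 r (U : 'M[F]_(p1, r)) (V : 'M[F]_(p2, r)) :
  (U <= perp V)%MS = (V <= perp U)%MS.
Proof.
rewrite /perp !genmxE !sub_kermx.
by apply/idP/idP => /eqP h; apply/eqP;
  [rewrite -(trmxK (V *m U^T)) trmx_mul trmxK h trmx0
  |rewrite -(trmxK (U *m V^T)) trmx_mul trmxK h trmx0].
Qed.

Lemma perp_anti (F : fieldType) p1 p2 r (U : 'M[F]_(p1, r)) (V : 'M[F]_(p2, r)) :
  (U <= V)%MS -> (perp V <= perp U)%MS.
Proof.
move=> sUV; rewrite perp_sym; apply: submx_trans sUV _.
by rewrite perp_sym.
Qed.

Lemma perpK (F : fieldType) p r (U : 'M[F]_(p, r)) : perp (perp U) = <<U>>%MS.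
Proof.
have s : (U <= perp (perp U))%MS by rewrite perp_sym.
have e : (U == perp (perp U))%MS.
  rewrite -(mxrank_leqif_eq s) !rank_perp.
  have := rank_leq_col U; move: (\rank U) => k hk; apply/eqP; lia.
rewrite {1}/perp; apply: eq_genmx.
exact: eqmx_trans (eqmx_sym (genmxE _)) (eqmx_sym (eqmxP e)).
Qed.

Lemma card_hyper (F : finFieldType) p r (P : 'M[F]_(p, r)) : (0 < r)%N ->
  (#|[set K : 'M[F]_r | [&& <<K>>%MS == K, \rank K == r.-1 & (P <= K)%MS]]| * (#|F| - 1))%N
  = (#|F| ^ (r - \rank P) - 1)%N.
Proof.
move=> r0; rewrite -rank_perp -card_lines; congr (_ * _)%N.
apply: (card_bij (f := @perp F r r) (g := @perp F r r)).
- move=> K; rewrite !inE => /and3P [/eqP gK rK PK].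
  by rewrite /perp genmx_id eqxx -/(perp K) rank_perp (eqP rK) perp_anti //=; apply/eqP; lia.
- move=> L; rewrite !inE => /and3P [/eqP gL rL LP].
  rewrite /perp genmx_id eqxx -/(perp L) rank_perp (eqP rL) perp_sym LP andbT /=.
  apply/eqP; lia.
- by move=> K; rewrite inE => /and3P [/eqP gK _ _]; rewrite perpK gK.
- by move=> L; rewrite inE => /and3P [/eqP gL _ _]; rewrite perpK gL.
Qed.

Lemma card_hyper_in (F : finFieldType) N (B P : 'M[F]_N) :
  (0 < \rank B)%N -> (P <= B)%MS ->
  (#|[set H : 'M[F]_N | [&& <<H>>%MS == H, \rank H == (\rank B).-1,
        (P <= H)%MS & (H <= B)%MS]]| * (#|F| - 1))%N
  = (#|F| ^ (\rank B - \rank P) - 1)%N.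
Proof.
move=> rB PB.
pose R := row_base B.
have fR : row_free R := row_base_free B.
have subR : forall k (H : 'M[F]_(k, N)), (H <= B)%MS -> H *m pinvmx R *m R = H.
  by move=> k H HB; apply: mulmxKpV; rewrite eq_row_base.
pose P' := P *m pinvmx R.
have rP' : \rank P' = \rank P by rewrite -(mxrankMfree _ fR) subR.
rewrite -rP' -(card_hyper P' rB); congr (_ * _)%N.
apply: (card_bij (f := fun H => <<H *m pinvmx R>>%MS) (g := fun K => <<K *m R>>%MS)).
- move=> H; rewrite !inE => /and4P [/eqP gH rH PH HB].
  rewrite genmx_id eqxx mxrank_gen -(mxrankMfree _ fR) subR // rH /=.
  by rewrite genmxE submxMr.
- move=> K; rewrite !inE => /and3P [/eqP gK rK PK].
  rewrite genmx_id eqxx mxrank_gen mxrankMfree // rK /= !genmxE.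
  rewrite -{1}(subR _ P PB) submxMr /=; last by rewrite -gK genmxE in PK.

  by apply: submx_trans (submxMl K R) _; rewrite eq_row_base.
- move=> H; rewrite inE => /and4P [/eqP gH _ _ HB].
  by rewrite (eq_genmx (eqmxMr _ (genmxE _))) subR // gH.
- move=> K; rewrite inE => /and3P [/eqP gK _ _].
  by rewrite (eq_genmx (eqmxMr _ (genmxE _))) mulmxKp // gK.
Qed.

Lemma point_meet (F : fieldType) n (A' B' B : 'M[F]_(pdim n)) :
  \rank A' = n -> (A' <= B')%MS -> \rank B' = n.+1 -> \rank B = n.+1 ->
  (\rank (A' :&: B)%MS == 0)%N -> \rank (B' :&: B)%MS = 1%N.
Proof.
move=> rA sAB rB' rB /eqP d.
have h1 := mxrank_sum_cap A' B.
have h2 := mxrank_sum_cap B' B.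
have h3 : (\rank (A' + B)%MS <= \rank (B' + B)%MS)%N by apply: mxrankS; apply: addsmxS.
have h4 : (\rank (B' + B)%MS <= (2*n).+1)%N := rank_leq_col (B' + B)%MS.
lia.
Qed.

Lemma meet_iff (F : fieldType) m (A B B' : 'M[F]_m) :
  (A <= B)%MS -> \rank (B' :&: B)%MS = 1%N ->
  (~~ (\rank (A :&: B')%MS == 0)%N) = (B' :&: B <= A)%MS.
Proof.
move=> AB r1; apply/idP/idP => [nz|s].
  have s : (A :&: B' <= B' :&: B)%MS.
    by rewrite sub_capmx capmxSr (submx_trans (capmxSl _ _) AB).
  have : (A :&: B' == B' :&: B)%MS.
    rewrite -(mxrank_leqif_eq s) r1; have := mxrankS s; rewrite r1.
    move: nz; move: (\rank _) => k; lia.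
  case/andP => _ h; exact: submx_trans h (capmxSl _ _).
have s2 : (B' :&: B <= A :&: B')%MS by rewrite sub_capmx s capmxSl.
have := mxrankS s2; rewrite r1; move: (\rank (A :&: B')%MS) => k; lia.
Qed.

Theorem mainTheorem3 (F : finFieldType) (n : nat) (S : {set flagT F n})
  (B : 'M[F]_(pdim n)) :
  (2 <= n)%N ->
  maximal_coclique S ->
  (exists A : 'M[F]_(pdim n), (A, B) \in S) ->
  (exists k : nat,
     [/\ (1 <= k)%N, (k <= n.+1)%N &
         #|[set f in S | f.2 == B]| = gauss1 k #|F|]) /\
  (#|[set f in S | f.2 == B]| = gauss1 n.+1 #|F| <->
   (forall f : flagT F n, f \in S -> ~~ pdisjoint f.1 B)).
Proof.
move=> n2 [coS maxS] [A0 A0S].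
have flagS : forall f, f \in S -> is_flag f.
  by move=> f fS; case/andP: coS => /forallP /(_ f) /implyP /(_ fS).
have noppS : forall f g, f \in S -> g \in S -> ~~ opposite f g.
  move=> f g fS gS; case/andP: coS => _ /forallP /(_ f) /implyP /(_ fS).
  by move/forallP /(_ g) /implyP /(_ gS).
have [gA0 rA0 /andP [gB rB] A0B] := and4P (flagS _ A0S).
move: gA0 gB rA0 rB A0B => /= gA0 gB /eqP rA0 /eqP rB A0B.
have ptS : forall f, f \in S -> pdisjoint f.1 B -> \rank (f.2 :&: B)%MS = 1%N.
  move=> f fS d; have [_ /eqP r1 /andP [_ /eqP r2] s12] := and4P (flagS _ fS).
  exact: point_meet r1 s12 r2 rB d.
have noppE : forall A g, (A <= B)%MS -> g \in S ->
    ~~ opposite (A, B) g = (pdisjoint g.1 B ==> (g.2 :&: B <= A)%MS).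
  move=> A g AB gS; rewrite /opposite /=.
  case d: (pdisjoint g.1 B); last by rewrite andbF.
  by rewrite andbT /= /pdisjoint (meet_iff AB (ptS g gS d)).
pose P := (\sum_(f in S | pdisjoint f.1 B) (f.2 :&: B))%MS.
have PE : forall A, (A <= B)%MS -> (P <= A)%MS =
    [forall g in S, ~~ opposite (A, B) g].
  move=> A AB; apply/sumsmx_subP/forall_inP => [h g gS|h g /andP [gS d]].
    by rewrite noppE //; apply/implyP => d; apply: h; rewrite gS.
  by have := h g gS; rewrite noppE // d.
have charS : forall A, <<A>>%MS == A -> \rank A = n -> (A <= B)%MS ->
    ((A, B) \in S) = (P <= A)%MS.
  move=> A gA rA AB; rewrite PE //; apply/idP/forall_inP => [AS g gS|h].
    exact: noppS.
  pose T := (A, B) |: S.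
  have flA : is_flag (A, B) by rewrite /is_flag /= /subsp gA rA eqxx /pspace gB rB !eqxx AB.
  have nsA : ~~ pdisjoint A B.
    rewrite /pdisjoint -lt0n; apply: leq_trans (mxrankS (_ : (A <= A :&: B)%MS)).
      by rewrite rA; lia.
    by rewrite sub_capmx submx_refl AB.
  have coT : coclique T.
    apply/andP; split; apply/forall_inP => f; rewrite in_setU1 => /predU1P [->|fS] //; try exact: flagS.
      apply/forall_inP => g; rewrite in_setU1 => /predU1P [->|gS]; last exact: h.
      by rewrite /opposite /= (negbTE nsA).
    apply/forall_inP => g; rewrite in_setU1 => /predU1P [->|gS]; last exact: noppS.
    by rewrite /opposite andbC; exact: h.
  have := maxS T coT (subsetUr _ _); rewrite /T => <-; exact: setU11.
have PB : (P <= B)%MS by apply/sumsmx_subP => f _; exact: capmxSr.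
have PA0 : (P <= A0)%MS by rewrite -(charS A0 gA0 rA0 A0B).
have rP : (\rank P <= n)%N by have := mxrankS PA0; rewrite rA0.
pose X := [set H : 'M[F]_(pdim n) | [&& <<H>>%MS == H, \rank H == (\rank B).-1,
        (P <= H)%MS & (H <= B)%MS]].
have cardE : #|[set f in S | f.2 == B]| = #|X|.
  apply: (card_bij (f := fun f : flagT F n => f.1) (g := fun H => (H, B))).
  - move=> f; rewrite !inE => /andP [fS /eqP f2].
    have [gf /eqP rf _ sf] := and4P (flagS f fS).
    rewrite f2 in sf; rewrite /subsp in gf.
    rewrite gf rB rf eqxx sf andbT /= -(charS _ gf rf sf) -f2.
    by case: (f) fS.
  - move=> H; rewrite !inE => /and4P [gH rH PH HB].
    by rewrite eqxx andbT charS // (eqP rH) rB.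
  - by move=> [a b]; rewrite inE => /andP [_ /eqP /= ->].
  - by [].
have q1 : (1 < #|F|)%N := card_finNzRing_gt1 F.
have hc := card_hyper_in (B := B) (P := P) (ltac:(by rewrite rB)) PB.
rewrite -/X rB in hc.
have gE : forall k c, (c * (#|F| - 1) = #|F| ^ k - 1)%N -> gauss1 k #|F| = c.
  by move=> k c h; rewrite /gauss1 -h mulnK // subn_gt0.
split.
  exists (n.+1 - \rank P)%N; split; try lia.
  by rewrite cardE (gE _ _ hc).
have gmax : (gauss1 n.+1 #|F| * (#|F| - 1) = #|F| ^ n.+1 - 1)%N.
  have hl := card_lines (1%:M : 'M[F]_n.+1).
  by rewrite mxrank1 in hl; rewrite (gE _ _ hl).
split => [e f fS|h].
  rewrite cardE in e; rewrite e gmax in hc.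
  have e1 : (#|F| ^ n.+1 = #|F| ^ (n.+1 - \rank P))%N.
    have h1 : (0 < #|F| ^ n.+1)%N by rewrite expn_gt0 (ltnW q1).
    have h2 : (0 < #|F| ^ (n.+1 - \rank P))%N by rewrite expn_gt0 (ltnW q1).
    lia.
  move/eqP: e1; rewrite eqn_exp2l // => /eqP e1.
  have P0 : \rank P = 0%N by lia.
  apply/negP => d.
  have : (f.2 :&: B <= P)%MS by apply: (sumsmx_sup f) => //; rewrite fS d.
  move/mxrankS; rewrite P0 ptS //.
have P0 : \rank P = 0%N.
  apply/eqP; rewrite mxrank_eq0 -submx0; apply/sumsmx_subP => f /andP [fS d].
  by rewrite (negbTE (h f fS)) in d.
by rewrite P0 subn0 in hc; rewrite cardE (gE _ _ hc).
Qed.
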